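(* There is a function $C(t,\epsilon)$ such that the following holds for every positive integer $t$ and every $\epsilon\in(0,1)$: let $G$ be a connected balanced bipartite graph with parts $X,Y$ each of order $n$, with $\delta(G)\geq 3C(t,\epsilon)$ and with no induced $S_{t,t}$. Then for any vertices $x,x'\in X\setminus U_X(\epsilon)$ we have $|N(x)\cap N(x')|\geq (1-10\epsilon)\Delta_X$.
   Context: For positive integers $a,b$, the biclaw $S_{a,b}$ is the graph with vertex set $\{x,x_1,\dots,x_a,y,y_1,\dots,y_b\}$ and edges $xy$, $xy_1,\dots,xy_b$, $yx_1,\dots,yx_a$; ''no induced $S_{t,t}$'' means no induced subgraph isomorphic to $S_{t,t}$. For a bipartite graph with parts $X,Y$, $\Delta_X=\max_{x\in X} d(x)$ and $U_X(\epsilon)=\{x\in X: d(x)\leq (1-\epsilon)\Delta_X\}$. $N(v)$ is the neighbourhood and $\delta(G)$ the minimum degree. *)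

(* Defs.v *)
From HB Require Import structures.
From mathcomp Require Import all_boot all_order all_algebra.
From mathcomp Require Import Rstruct.
From Stdlib Require Rdefinitions.
Notation R := Rdefinitions.R.
Set Implicit Arguments. Unset Strict Implicit. Unset Printing Implicit Defensive.
Import Order.TTheory GRing.Theory Num.Theory.
Local Open Scope ring_scope.

(* Vertex type of the biclaw S_{a,b}:
   inl (inl true)  = x,  inl (inl false) = y,
   inl (inr i)     = x_i (i < a),  inr j = y_j (j < b). *)
Definition biclaw_vert (a b : nat) : finType := ((bool + 'I_a) + 'I_b)%type.

Definition biclaw_adj (a b : nat) (u v : biclaw_vert a b) : bool :=
  match u, v with
  | inl (inl true), inl (inl false) => true
  | inl (inl false), inl (inl true) => true
  | inl (inl true), inr _ => true
  | inr _, inl (inl true) => true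
  | inl (inl false), inl (inr _) => true
  | inl (inr _), inl (inl false) => true
  | _, _ => false
  end.

Definition simple_graph (T : finType) (e : rel T) : Prop :=
  symmetric e /\ irreflexive e.

Definition has_induced_biclaw (T : finType) (e : rel T) (a b : nat) : Prop :=
  exists f : biclaw_vert a b -> T,
    injective f /\ forall u v, e (f u) (f v) = biclaw_adj u v.

Definition nbhd (T : finType) (e : rel T) (v : T) : {set T} := [set u | e v u].

Definition deg (T : finType) (e : rel T) (v : T) : nat := #|nbhd e v|.

Definition connected_graph (T : finType) (e : rel T) : Prop :=
  forall u v : T, connect e u v.

Definition bipartite_parts (T : finType) (e : rel T) (X : {set T}) : Prop :=
  forall u v, e u v -> (u \in X) != (v \in X).

Definition min_degree_ge (T : finType) (e : rel T) (d : R) : Prop :=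
  forall v : T, (d <= (deg e v)%:R)%R.

Definition DeltaX (T : finType) (e : rel T) (X : {set T}) : nat :=
  \max_(x in X) deg e x.

Definition U_X (T : finType) (e : rel T) (X : {set T}) (eps : R) : {set T} :=
  [set x in X | ((deg e x)%:R <= (1 - eps) * (DeltaX e X)%:R)%R].

(* Main.v *)
Require Import Defs.
From mathcomp Require Import all_boot all_order all_algebra.
From mathcomp Require Import Rstruct.
From Stdlib Require Rdefinitions.
Import Order.TTheory GRing.Theory Num.Theory.
From mathcomp Require Import lra.
From mathcomp Require Import zify.
Import Order.TTheory GRing.Theory Num.Theory.

Set Implicit Arguments. Unset Strict Implicit.

Lemma card_sum (T : finType) (B : {set T}) (P : pred T) :
  #|[set b in B | P b]| = \sum_(b in B) (P b : nat).
Proof.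
rewrite -sum1_card big_mkcond /= [RHS]big_mkcond /=.
apply: eq_bigr => b _; rewrite !inE; by case: (b \in B); case: (P b).
Qed.

Lemma dcount (T : finType) (A B : {set T}) (r : T -> T -> bool) :
  \sum_(a in A) #|[set b in B | r a b]| = \sum_(b in B) #|[set a in A | r a b]|.
Proof.
under eq_bigr do rewrite card_sum.
under [RHS]eq_bigr do rewrite card_sum.
exact: exchange_big.
Qed.

Lemma avg (T : finType) (A : {set T}) (F : T -> nat) : 0 < #|A| ->
  exists2 c, c \in A & \sum_(a in A) F a <= F c * #|A|.
Proof.
move=> hA; have [c cA hc] := eq_bigmax_cond F hA.
exists c => //; rewrite -hc.
rewrite -sum1_card big_distrr /=.
by apply: leq_sum => a aA; rewrite muln1; apply: leq_bigmax_cond.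
Qed.

Lemma pick_out (T : finType) (A Bad : {set T}) (m : nat) :
  m <= #|A| -> #|Bad| < m -> exists p, p \in A /\ p \notin Bad.
Proof.
move=> h1 h2.
have : 0 < #|A :\: Bad|.
  have := cardsID Bad A; have := subset_leq_card (subsetIr A Bad); lia.
rewrite card_gt0 => /set0Pn [p]; rewrite inE => /andP[pB pA].
by exists p.
Qed.

Lemma arith1 K m d a r : 2 <= K -> 2*(m+1) <= d -> a + r = d -> K*r < d -> m+1 <= a.
Proof. move=> *. nia. Qed.

Lemma arith2 K m d y y' y'' : 11 <= K -> (K+4)*(m+1) <= d -> y + y' = d -> K * y' < d + K *  m -> y <= 1 + y'' -> m <= y''.
Proof. move=> *. nia. Qed.
Lemma arith3 K m d a r b1 b2 : 11 <= K -> (K+4)*(m+1) <= d -> a + r = d -> r <= b1 + b2 -> K * b1 < d -> K * b2 < 2*d -> m.+1 <= a.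
Proof. move=> *. nia. Qed.
Lemma arith4 K da s u x0 r0 r' : 11 <= K -> 2 <= da -> u + x0 = da.-1 -> x0 <= r0 -> K * r0 < da.-1 -> K * r' < da.-1 -> u <= s + r' -> da <= K * s.
Proof. move=> *. nia. Qed.
Lemma arith5 K m a b d : a + b = d.-1 -> a < m -> b <= K * m -> (K+4)*(m+1) <= d -> False.
Proof. move=> *. nia. Qed.

Unset Implicit Arguments.

Section Graph.
Variables (T : finType) (e : rel T) (X : {set T}) (t : nat).
Hypotheses (Hsym : symmetric e) (Hirr : irreflexive e)
  (Hbip : bipartite_parts e X) (Hnb : ~ has_induced_biclaw e t t).
Local Notation N := (nbhd e).

Lemma inN x y : (y \in N x) = e x y.
Proof. by rewrite /nbhd inE. Qed.

Lemma same_side a b w : e a w -> e b w -> ~~ e a b.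
Proof.
move=> /Hbip h1 /Hbip h2; apply/negP => /Hbip h3.
by move: h1 h2 h3; case: (a \in X); case: (b \in X); case: (w \in X).
Qed.

Lemma same_side' a b w : e w a -> e w b -> ~~ e a b.
Proof. by rewrite ![e w _]Hsym; apply: same_side. Qed.

Lemma BC u v (A B : {set T}) : e u v ->
  A \subset N v :\ u -> B \subset N u :\ v -> t <= #|A| -> t <= #|B| ->
  (forall a b, a \in A -> b \in B -> ~~ e a b) -> False.
Proof.
move=> euv sA sB tA tB hAB; apply: Hnb.
pose fA (i : 'I_t) : T := enum_val (widen_ord tA i).
pose fB (i : 'I_t) : T := enum_val (widen_ord tB i).
have fAin i : fA i \in A by apply: enum_valP.
have fBin i : fB i \in B by apply: enum_valP.
have fAN i : e v (fA i) /\ fA i != u.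
  by have := subsetP sA _ (fAin i); rewrite !inE => /andP[-> ].
have fBN i : e u (fB i) /\ fB i != v.
  by have := subsetP sB _ (fBin i); rewrite !inE => /andP[-> ].
have fAinj : injective fA.
  by move=> i j /enum_val_inj /(congr1 val) /= /val_inj.
have fBinj : injective fB.
  by move=> i j /enum_val_inj /(congr1 val) /= /val_inj.
have evu : e v u by rewrite Hsym.
pose f (z : biclaw_vert t t) : T :=
  match z with
  | inl (inl true) => u
  | inl (inl false) => v
  | inl (inr i) => fA i
  | inr j => fB j
  end.
exists f; split.
- have loop a : e a a -> False by rewrite Hirr.
  move=> [[[|]|i]|j] [[[|]|i']|j'] //= h.
  + by exfalso; apply: (loop u); rewrite {2}h.
  + by exfalso; case: (fAN i') => _; rewrite -h eqxx.
  + by exfalso; case: (fBN j') => h1 _; apply: (loop u); rewrite {2}h.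
  + by exfalso; apply: (loop u); rewrite -{1}h.
  + by exfalso; case: (fAN i') => h1 _; apply: (loop v); rewrite {2}h.
  + by exfalso; case: (fBN j') => _; rewrite -h eqxx.
  + by exfalso; case: (fAN i) => _; rewrite h eqxx.
  + by exfalso; case: (fAN i) => h1 _; apply: (loop v); rewrite -{2}h.
  + by move: (fAinj _ _ h) => ->.
  + exfalso; case: (fAN i) => h1 _; case: (fBN j') => h2 _.
    have h3 : e u (fA i) by rewrite h.
    by move: (same_side _ _ _ h1 h3); rewrite evu.
  + by exfalso; case: (fBN j) => h1 _; apply: (loop u); rewrite -{2}h.
  + by exfalso; case: (fBN j) => _; rewrite h eqxx.
  + exfalso; case: (fAN i') => h1 _; case: (fBN j) => h2 _.
    have h3 : e u (fA i') by rewrite -h.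
    by move: (same_side _ _ _ h1 h3); rewrite evu.
  + by move: (fBinj _ _ h) => ->.
- have nA i : ~~ e u (fA i).
    by case: (fAN i) => h _; apply: (same_side _ _ v); rewrite // Hsym.
  have nB j : ~~ e v (fB j).
    by case: (fBN j) => h _; apply: (same_side _ _ u); rewrite // Hsym.
  have nAA i i' : ~~ e (fA i) (fA i').
    by case: (fAN i) => h _; case: (fAN i') => h' _; apply: (same_side' _ _ v).
  have nBB j j' : ~~ e (fB j) (fB j').
    by case: (fBN j) => h _; case: (fBN j') => h' _; apply: (same_side' _ _ u).
  have nAB i j : ~~ e (fA i) (fB j) by apply: hAB.
  move=> [[[|]|i]|j] [[[|]|i']|j'] /=; rewrite ?Hirr ?euv ?evu //.
  all: try by case: (fAN i) => ->.
  all: try by case: (fAN i') => ->.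
  all: try by case: (fBN j) => ->.
  all: try by case: (fBN j') => ->.
  all: try by apply/negbTE.
  all: try by rewrite Hsym; case: (fAN i) => ->.
  all: try by rewrite Hsym; case: (fBN j) => ->.
  all: try by rewrite Hsym; apply/negbTE.
Qed.


Lemma greedy (B Q : {set T}) (k : nat) :
  (forall b, b \in B -> k <= #|Q :\: N b|) -> k <= #|Q| ->
  forall s, s <= k -> exists B' S : {set T}, [/\ B' \subset B, S \subset Q, #|S| = s,
     (forall b c, b \in B' -> c \in S -> ~~ e b c) & #|B| * (k - s)^s <= #|B'| * #|Q|^s].
Proof.
move=> hB hQ; elim=> [_|s IH hs].
  exists B, set0; split => //; first exact: sub0set; first exact: cards0.
    by move=> b c _; rewrite inE.
have [B' [S [sB sS cS nS ineq]]] := IH (ltnW hs).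
pose A := Q :\: S.
have cA : #|A| = #|Q| - s by rewrite cardsD (setIidPr sS) cS.
have hA : 0 < #|A| by rewrite cA; lia.
have [c cA' hc] := avg (fun c => #|[set b in B' | ~~ e b c]|) hA.
rewrite (dcount A B' (fun c b => ~~ e b c)) in hc.
have lb : #|B'| * (k - s) <= \sum_(b in B') #|[set a in A | ~~ e b a]|.
  rewrite -sum1_card big_distrl /=; apply: leq_sum => b bB; rewrite mul1n.
  have := hB b (subsetP sB b bB).
  have sub : Q :\: N b \subset [set a in A | ~~ e b a] :|: S.
    apply/subsetP => a; rewrite !inE ?inN => /andP[nb aQ].
    by case: (a \in S); rewrite ?orbT // nb aQ.
  have := subset_leq_card sub; rewrite cardsU cS; lia.
exists [set b in B' | ~~ e b c], (c |: S); split.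
- apply/subsetP => b; rewrite inE => /andP[bB _]; exact: (subsetP sB b bB).
- rewrite subUset sub1set; move: cA'; rewrite inE => /andP[_ ->]; exact: sS.
- move: cA'; rewrite inE => /andP[cS' _]; by rewrite cardsU1 cS' cS.
- move=> b c'; rewrite !inE => /andP[bB nbc] /orP[/eqP -> //|c'S]; exact: nS.
- have h1 : (k - s.+1)^s.+1 <= (k-s)^s.+1 by rewrite leq_exp2r //; lia.
  have h2 : #|A| <= #|Q| by rewrite cA; lia.
  apply: (leq_trans (leq_mul (leqnn _) h1)).
  rewrite !expnS mulnCA.
  apply: (leq_trans (leq_mul (leqnn _) ineq)).
  rewrite mulnCA [X in _ <= X]mulnCA [X in _ <= X]mulnA mulnA.
  apply: leq_mul => //.
  apply: (leq_trans lb); apply: (leq_trans hc).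
  by rewrite mulnC; apply: leq_mul.
Qed.

Lemma TL (K : nat) u v : 0 < K -> 0 < t -> e u v -> (2*t+1)*K <= #|N u :\ v| ->
  #|[set p in N v :\ u | #|N u :\ v| <= K * #|(N u :\ v) :\: N p|]| < t * (2*K) ^ t.
Proof.
move=> K0 t0 euv hq.
set Q := N u :\ v; set q := #|Q|; set Bad := [set p in _ | _].
rewrite ltnNge; apply/negP => hB.
pose k := q %/ K.
have hk : forall b, b \in Bad -> k <= #|Q :\: N b|.
  move=> b; rewrite inE => /andP[_ hb]; rewrite /k.
  by apply: (leq_trans (leq_div2r K hb)); rewrite mulKn.
have k2t : 2*t+1 <= k by rewrite /k leq_divRL.
have kq : k <= q by rewrite /k leq_div.
have [B' [S [sB sS cS nS ineq]]] := greedy Bad Q k hk kq t ltac:(lia).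
have qlt : q < k.+1 * K := ltn_ceil q K0.
have q2 : q <= 2*K*(k-t) by nia.
have qpos : 0 < q ^ t by rewrite expn_gt0; apply/orP; left; lia.
have : t * q ^ t <= #|B'| * q ^ t.
  apply: (leq_trans _ ineq).
  apply: (@leq_trans (t * ((2*K) ^ t * (k-t) ^ t))).
    by rewrite -expnMn leq_mul2l leq_exp2r // q2 orbT.
  by rewrite mulnA leq_mul2r hB orbT.
rewrite leq_pmul2r // => tB'.
apply: (BC u v B' S euv).
- apply: (subset_trans sB); apply/subsetP => p; rewrite inE; by case/andP.
- exact: sS.
- exact: tB'.
- by rewrite cS.
- exact: nS.
Qed.

Set Implicit Arguments.
Variables (K : nat) (x : T) (Dl Lb : nat).
Local Notation M := (t * (2*K) ^ t).
Hypotheses (ht : 0 < t) (hK : 11 <= K) (hdeg : forall v, Lb <= deg e v)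
  (hLb : (K+4)*(M+1) + (2*t+1)*K + 1 <= Lb) (xX : x \in X)
  (hD : forall p, p \in X -> deg e p <= Dl) (hDx : Dl <= 2 * deg e x).

Local Notation Q0 := (N x).
Local Notation d0 := (deg e x).
Definition C0 := [set p | K * #|Q0 :\: N p| < d0].
Definition Cw := [set c | M.+1 <= #|N c :&: Q0|].
Definition Yg := [set w | [exists c, (c \in Cw) && e w c]].
Definition Atyp u v := [set p in N v :\ u | #|N u :\ v| <= K * #|(N u :\ v) :\: N p|].

Lemma M_gt0 : 0 < M.
Proof. by rewrite muln_gt0 ht expn_gt0 muln_gt0 /=; lia. Qed.

Lemma degL v : (K+4)*(M+1) + (2*t+1)*K + 1 <= deg e v.
Proof. exact: leq_trans hLb (hdeg v). Qed.

Lemma degM v : (K+4)*(M+1) <= deg e v.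
Proof. have := degL v; lia. Qed.

Lemma cardD1N u v : e u v -> #|N u :\ v| = (deg e u).-1.
Proof. by move=> h; rewrite /deg (cardsD1 v (N u)) inN h. Qed.

Lemma TLc u v : e u v -> #|Atyp u v| < M.
Proof.
move=> euv; apply: TL => //; first lia.
rewrite cardD1N //; have := degL u; nia.
Qed.

Lemma typ u v p : e u v -> p \in N v :\ u -> p \notin Atyp u v ->
  K * #|(N u :\ v) :\: N p| < #|N u :\ v|.
Proof. by move=> _ pin; rewrite inE pin /= -ltnNge. Qed.

Lemma x_C0 : x \in C0.
Proof. rewrite inE setDv cards0 muln0; have := degL x; lia. Qed.

Lemma C0_Cw : C0 \subset Cw.
Proof.
apply/subsetP => p; rewrite !inE => h.
have h2 := cardsID (N p) Q0; rewrite [N p :&: _]setIC.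
rewrite -addn1; apply: (arith1 _ _ h2 h) => //; first lia.
apply: leq_trans (degM x); rewrite leq_mul2r; apply/orP; right; lia.
Qed.

Lemma Cw_X c : c \in Cw -> c \in X.
Proof.
rewrite inE => h.
have : 0 < #|N c :&: Q0| by lia.
rewrite card_gt0 => /set0Pn [q]; rewrite inE !inN => /andP[ecq exq].
have := Hbip _ _ exq; have := Hbip _ _ ecq; rewrite xX.
by case: (c \in X); case: (q \in X).
Qed.

Lemma strongQ0 q : q \in Q0 -> #|N q :\: C0| < M.
Proof.
move=> qQ; rewrite inN in qQ.
apply: (leq_ltn_trans _ (TLc qQ)); apply: subset_leq_card.
apply/subsetP => p; rewrite inE => /andP[pC pq].
have px : p != x by apply/eqP => h; move: pC; rewrite h x_C0.
apply/negPn/negP => hA.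
have pin : p \in N q :\ x by rewrite in_setD1 px pq.
have := typ qQ pin hA; rewrite cardD1N //.
have sub : Q0 :\: N p \subset (N x :\ q) :\: N p.
  apply/subsetP => y; rewrite !inE => /andP[ny ->]; rewrite ny andbT.
  apply/eqP => hy; move: ny; rewrite hy; rewrite inN in pq; by rewrite Hsym pq.
have := subset_leq_card sub; move: pC; rewrite inE -leqNgt; nia.
Qed.

Lemma Glem c w : c \in Cw -> e c w -> K * #|N w :\: C0| < deg e w + K * M.
Proof.
move=> cC ecw.
have ewc : e w c by rewrite Hsym.
have [q [qin qA]] : exists q, q \in (N c :&: Q0) :\ w /\ q \notin Atyp w c.
  apply: (@pick_out _ _ _ M); last exact: TLc.
  move: cC; rewrite inE => h; have := cardsD1 w (N c :&: Q0); lia.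
move: qin; rewrite !inE => /andP[qw /andP[ecq xq]].
have qin' : q \in N c :\ w by rewrite in_setD1 qw inN.
have hr := typ ewc qin' qA.
have sub : N w :\: C0 \subset ((N w :\ c) :\: N q) :|: [set c] :|: (N q :\: C0).
  apply/subsetP => y; rewrite !inE ?inN => /andP[yC ewy].
  rewrite yC ewy /= !andbT.
  by case: (y == c); case: (e q y).
have := subset_leq_card sub.
have xq' : q \in Q0 by rewrite inN.
have := strongQ0 xq'.
rewrite cardD1N // in hr.
move=> h1 h2.
have h3 := leq_trans h2 (leq_trans (leq_card_setU _ _) (leq_add (leq_card_setU _ _) (leqnn _))).
rewrite cards1 in h3.
nia.
Qed.

Lemma deg2 v : 2 <= deg e v.
Proof. have := degL v; move: (t * (2*K) ^ t) => m; clear; nia. Qed.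

Lemma pickC0 z a : z \in Yg -> e a z ->
  exists p, p \in (N z :\ a) :&: C0 /\ p \notin Atyp a z.
Proof.
move=> zY eaz.
move: zY; rewrite inE => /existsP[c /andP[cC ezc]].
have ecz : e c z by rewrite Hsym.
have Gz := Glem cC ecz.
apply: (@pick_out _ _ _ M); last exact: TLc.
have h1 := cardsID C0 (N z).
have h2 := cardsD1 a (N z :&: C0).
have sub : (N z :&: C0) :\ a \subset (N z :\ a) :&: C0.
  apply/subsetP => y; rewrite !inE; by case: (y == a); case: (y \in C0); case: (e z y).
have h3 := subset_leq_card sub.
apply: (arith2 hK (degM z) h1 Gz).
have : (a \in N z :&: C0) <= 1 by case: (a \in _).
lia.
Qed.

Lemma closureY z a w : z \in Yg -> e z a -> e a w -> w \in Yg.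
Proof.
move=> zY eza eaw; apply/negPn/negP => /negP wY.
have hw : forall c, e w c -> c \notin Cw.
  move=> c ewc; apply/negP => cC; apply: wY; rewrite inE; apply/existsP; exists c.
  by rewrite cC ewc.
have eaz : e a z by rewrite Hsym.
have ewa : e w a by rewrite Hsym.
have [p [pin pA]] := pickC0 zY eaz.
move: pin; rewrite in_setI => /andP[pin pC0].
have r0 := typ eaz pin pA.
have pCw : p \in Cw := subsetP C0_Cw p pC0.
have pX := Cw_X pCw.
have ezp : e z p by move: pin; rewrite in_setD1 inN => /andP[_ ->].
set U := (N a :\ w) :&: N p.
set A' := (N w :\ a) :\: Atyp a w.
have hu : forall u, u \in U -> #|[set p' in A' | e p' u]| < M.
  move=> u; rewrite in_setI inN => /andP[_ epu].
  apply: (leq_ltn_trans _ (TLc epu)); apply: subset_leq_card.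
  apply/subsetP => p'; rewrite inE => /andP[p'A' ep'u]; move: p'A'; rewrite in_setD => /andP[p'A p'in].
  apply/negPn/negP => hA.
  have ewp' : e w p' by move: p'in; rewrite in_setD1 inN => /andP[_ ->].
  have p'p : p' != p by apply/eqP => h; move: (hw _ ewp'); rewrite h pCw.
  have eup' : e u p' by rewrite Hsym.
  have pin'' : p' \in N u :\ p by rewrite in_setD1 p'p inN.
  have r := typ epu pin'' hA.
  move/negP: (hw _ ewp'); apply.
  rewrite inE.
  have h1 := cardsID (N p') Q0; rewrite [N p' :&: _]setIC.
  have sub : Q0 :\: N p' \subset (Q0 :\: N p) :|: ((N p :\ u) :\: N p').
    apply/subsetP => y; rewrite !inE ?inN => /andP[np'y xy].
    have yu : y != u by apply/eqP => hy; move: np'y; rewrite hy ep'u.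
    by rewrite np'y xy yu /=; case: (e p y).
  have h2 := leq_trans (subset_leq_card sub) (leq_card_setU _ _).
  have pC0' := pC0; rewrite inE in pC0'.
  have h3 : #|N p :\ u| <= Dl by apply: leq_trans (hD pX); rewrite cardD1N // leq_pred.
  have h4 : K * #|(N p :\ u) :\: N p'| < 2 * d0.
    by apply: (leq_trans r); apply: (leq_trans h3).
  have h5 : #|Q0 :&: N p'| + #|Q0 :\: N p'| = deg e x by [].
  exact: (arith3 hK (degM x) h5 h2 pC0' h4).
have hp' : forall p', p' \in A' -> deg e a <= K * #|[set u in U | e p' u]|.
  move=> p'; rewrite inE => /andP[p'A p'in].
  have r' := typ eaw p'in p'A.
  have h1 := cardsID (N p) (N a :\ w).
  have sub1 : (N a :\ w) :\: N p \subset (N a :\ z) :\: N p.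
    apply/subsetP => y; rewrite !inE ?inN => /andP[npy /andP[yw ay]].
    have yz : y != z by apply/eqP => hy; move: npy; rewrite hy Hsym ezp.
    by rewrite npy yz ay.
  have h2 := subset_leq_card sub1.
  have sub2 : U \subset [set u in U | e p' u] :|: ((N a :\ w) :\: N p').
    apply/subsetP => y yU; rewrite in_setU.
    case ep'y: (e p' y); first by rewrite inE yU ep'y.
    apply/orP; right; move: yU; rewrite !inE ?inN ep'y /=; by case/andP.
  have h3 := leq_trans (subset_leq_card sub2) (leq_card_setU _ _).
  rewrite !cardD1N // in r0 r' h1.
  apply: (arith4 hK _ h1 h2 r0 r' h3).
  exact: deg2.
have E := dcount A' U (fun p' u => e p' u).
have S1 : #|A'| * deg e a <= K * \sum_(p' in A') #|[set u in U | e p' u]|.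
  rewrite big_distrr /= -sum1_card big_distrl /=; apply: leq_sum => p' hp.
  by rewrite mul1n; apply: hp'.
have S2 : \sum_(u in U) #|[set p' in A' | e p' u]| <= #|U| * M.
  rewrite -sum1_card big_distrl /=; apply: leq_sum => u hu'.
  by rewrite mul1n; apply: ltnW; apply: hu.
have Ua : #|U| <= deg e a.
  apply: subset_leq_card; apply/subsetP => y; rewrite !inE ?inN.
  by case/andP => /andP[_ ->].
have hA' : #|A'| <= K * M.
  have da0 : 0 < deg e a by have := deg2 a; clear; lia.
  rewrite -(leq_pmul2r da0); apply: (leq_trans S1); rewrite E.
  rewrite -mulnA leq_mul2l; apply/orP; right.
  apply: (leq_trans S2); by rewrite mulnC leq_mul2l Ua orbT.
have h4 := cardsID (Atyp a w) (N w :\ a).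
have h5 : #|(N w :\ a) :&: Atyp a w| < M.
  exact: leq_ltn_trans (subset_leq_card (subsetIr _ _)) (TLc eaw).
rewrite cardD1N // in h4.
exact: (arith5 h4 h5 hA' (degM w)).
Qed.

Lemma inv_path v pth :
  (v \in X -> N v \subset Yg) /\ (v \notin X -> v \in Yg) -> path e v pth ->
  (last v pth \in X -> N (last v pth) \subset Yg) /\ (last v pth \notin X -> last v pth \in Yg).
Proof.
elim: pth v => [|y pth IH] v Iv //= /andP[evy hp]; apply: IH hp.
have := Hbip _ _ evy; case: Iv => I1 I2.
case vX: (v \in X) => /= hyX.
- have yX : y \notin X by move: hyX; case: (y \in X).
  split; first by rewrite (negbTE yX).
  by move=> _; apply: (subsetP (I1 vX)); rewrite inN.
- have yX : y \in X by move: hyX; case: (y \in X).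
  split; last by rewrite yX.
  move=> _; apply/subsetP => w; rewrite inN => eyw.
  exact: closureY (I2 (negbT vX)) evy eyw.
Qed.

Lemma final x' : x' \in X -> connected_graph e ->
  exists p r1 r2, [/\ deg e x' + d0 <= #|N x :&: N x'| + r1 + r2 + deg e p,
     K * r1 < deg e x', K * r2 < d0 & p \in X].
Proof.
move=> x'X hc.
have base : (x \in X -> N x \subset Yg) /\ (x \notin X -> x \in Yg).
  split; last by rewrite xX.
  move=> _; apply/subsetP => q; rewrite inN => exq; rewrite inE; apply/existsP.
  by exists x; rewrite (subsetP C0_Cw x x_C0) /= Hsym.
have [pth hp hl] := connectP (hc x x').
have [I1 _] := inv_path base hp; rewrite -hl in I1.
have : 0 < deg e x' by have := deg2 x'; clear; lia.
rewrite /deg card_gt0 => /set0Pn [w]; rewrite inN => ex'w.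
have wY : w \in Yg by apply: (subsetP (I1 x'X)); rewrite inN.
have [p [pin pA]] := pickC0 wY ex'w.
move: pin; rewrite in_setI => /andP[pin pC0].
have r1 := typ ex'w pin pA.
have ewp : e w p by move: pin; rewrite in_setD1 inN => /andP[_ ->].
exists p, #|(N x' :\ w) :\: N p|, #|Q0 :\: N p|; split.
- have h1 := cardsID (N p) (N x').
  have sub1 : N x' :\: N p \subset (N x' :\ w) :\: N p.
    apply/subsetP => y; rewrite !inE ?inN => /andP[npy x'y].
    have yw : y != w by apply/eqP => hy; move: npy; rewrite hy Hsym ewp.
    by rewrite npy yw x'y.
  have h2 := subset_leq_card sub1.
  have h3 := cardsID (N p) Q0.
  have h4 := cardsUI (N x' :&: N p) (Q0 :&: N p).
  have sub3 : (N x' :&: N p) :|: (Q0 :&: N p) \subset N p.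
    by rewrite subUset !subsetIr.
  have sub4 : (N x' :&: N p) :&: (Q0 :&: N p) \subset N x :&: N x'.
    apply/subsetP => y; rewrite !inE ?inN.
    by case: (e x' y); case: (e p y); case: (e x y).
  have h5 := subset_leq_card sub3.
  have h6 := subset_leq_card sub4.
  rewrite /deg; clear -h1 h2 h3 h4 h5 h6; lia.
- rewrite cardD1N // in r1; move: r1; rewrite /deg; clear; lia.
- by move: pC0; rewrite inE.
- exact: Cw_X (subsetP C0_Cw p pC0).
Qed.

End Graph.


Theorem mainTheorem13 :
  exists C : nat -> R -> R,
  forall (t : nat) (eps : R), (0 < t)%N -> (0 < eps)%R -> (eps < 1)%R ->
  forall (T : finType) (e : rel T) (X : {set T}) (n : nat),
    simple_graph e ->
    bipartite_parts e X ->
    #|X| = n -> #|~: X| = n ->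
    connected_graph e ->
    min_degree_ge e (3 * C t eps)%R ->
    ~ has_induced_biclaw e t t ->
    forall x x' : T, x \in X :\: U_X e X eps -> x' \in X :\: U_X e X eps ->
      ((1 - 10 * eps) * (DeltaX e X)%:R <= #|nbhd e x :&: nbhd e x'|%:R)%R.
Proof.
Local Open Scope ring_scope.
pose Kf (eps : R) := maxn 11 (Num.truncn (eps^-1)).+1.
pose Lf (t K : nat) := ((K+4)*(t*(2*K) ^ t+1) + (2*t+1)*K + 1)%N.
exists (fun t eps => (Lf t (Kf eps))%:R).
move=> t eps t0 e0 e1 T e X n [Hsym Hirr] Hbip cX cY hc hmd Hnb x x' xin x'in.
set D := DeltaX e X.
have [big|small] := lerP (1 - 10 * eps) 0.
  apply: (le_trans (mulr_le0_ge0 big (ler0n _ _))); exact: ler0n.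
have heavy : forall y, y \in X :\: U_X e X eps -> y \in X /\ ((1 - eps) * D%:R < (deg e y)%:R)%R.
  move=> y; rewrite /U_X !inE => /andP[hy yX]; split => //.
  by move: hy; rewrite yX /= -ltNge.
have [xX hx] := heavy x xin.
have [x'X hx'] := heavy x' x'in.
set K := Kf eps.
set L := Lf t K.
have hK : (11 <= K)%N by rewrite /K /Kf leq_maxl.
have hKe : (1 < K%:R * eps)%R.
  have h1 : (eps^-1 < K%:R)%R.
    apply: (lt_le_trans (truncnS_gt _)); by rewrite ler_nat /K /Kf leq_max ltnSn orbT.
  by rewrite -(ltr_pM2r e0) mulVf ?gt_eqF // in h1.
have hdeg : forall v, (L <= deg e v)%N.
  move=> v; have := hmd v; rewrite -natrM ler_nat => h.
  by apply: leq_trans h; rewrite leq_pmull.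
have hD : forall p, p \in X -> (deg e p <= D)%N.
  by move=> p pX; rewrite /D /DeltaX; apply: (leq_bigmax_cond (F := deg e) p pX).
have hDx : (D <= 2 * deg e x)%N.
  rewrite -(ler_nat R) natrM.
  have : (0 <= D%:R :> R)%R by exact: ler0n.
  move: hx; set a := ((deg e x)%:R : R); set d := (D%:R : R) => hx hd0.
  nra.
have [p [r1 [r2 [h1 h2 h3 pX]]]] :=
  final Hsym Hirr Hbip Hnb (K:=K) (x:=x) (Dl:=D) (Lb:=L) t0 hK hdeg (leqnn _) xX hD hDx x'X hc.
have hpD := hD p pX.
have hx'D := hD x' x'X.
have hxD := hD x xX.
move: h1 h2 h3 hpD hx'D hxD.
rewrite -!(ltr_nat R) -!(ler_nat R) !natrD !natrM.
set I := (#|_|%:R : R).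
set a := ((deg e x')%:R : R); set b := ((deg e x)%:R : R).
set d := (D%:R : R); set dp := ((deg e p)%:R : R).
set k := (K%:R : R).
set s1 := (r1%:R : R); set s2 := (r2%:R : R).
move: hx hx' hKe; rewrite -/a -/b -/d -/k => hx hx' hKe h1 h2 h3 hpD hx'D hxD.
have s10 : (0 <= s1)%R by exact: ler0n.
have s20 : (0 <= s2)%R by exact: ler0n.
have d0 : (0 <= d)%R by exact: ler0n.
have hs1 : (s1 <= eps * d)%R.
  have u1 : (0 <= (k * eps - 1) * s1)%R by apply: mulr_ge0; lra.
  have u2 : (0 <= eps * (d - k * s1))%R by apply: mulr_ge0; lra.
  lra.
have hs2 : (s2 <= eps * d)%R.
  have u1 : (0 <= (k * eps - 1) * s2)%R by apply: mulr_ge0; lra.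
  have u2 : (0 <= eps * (d - k * s2))%R by apply: mulr_ge0; lra.
  lra.
have u3 : (0 <= eps * d)%R by apply: mulr_ge0; lra.
lra.
Qed.
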